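(* Let $Z$ be a non-negative random variable satisfying $\mathbb{E}[Z^2]=1$. Then \[ \mathbb{E}\left[Z^2\,\frac{[Z-1/2]_+^2}{(Z+1/2)^2}\right]\ge \frac{1}{53}. \]
   Context: For $x\in\mathbb{R}$, $[x]_+=\max\{0,x\}$. *)

(* Defs.v *)
From mathcomp Require Import all_boot all_order all_algebra.
From mathcomp Require Import all_classical all_reals all_analysis.
Set Implicit Arguments. Unset Strict Implicit. Unset Printing Implicit Defensive.
Import Order.TTheory GRing.Theory Num.Theory.
Local Open Scope ring_scope.

Definition pos_part {R : realType} (x : R) : R := Num.max 0 x.

(* Main.v *)
Require Import Defs.
From mathcomp Require Import all_boot all_order all_algebra.
From mathcomp Require Import all_classical all_reals all_analysis.
From mathcomp Require Import lra.
Import Order.TTheory GRing.Theory Num.Theory.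
Import numFieldNormedType.Exports.
Local Open Scope ring_scope.

Lemma key (R : realType) (z : R) : 0 <= z ->
  z ^+ 2 / 4 <= z ^+ 2 * pos_part (z - 1 / 2) ^+ 2 / (z + 1 / 2) ^+ 2 + 1/5.
Proof.
move=> z0; rewrite /pos_part.
have hd : 0 < (z + 1/2) ^+ 2 by apply: exprn_gt0; lra.
case: (leP z (1/2)) => hz.
  have -> : Num.max 0 (z - 1/2) = 0 by apply/max_idPl; lra.
  rewrite expr0n /= mulr0 mul0r add0r; nra.
have -> : Num.max 0 (z - 1/2) = z - 1/2 by apply/max_idPr; lra.
rewrite -lerBlDr ler_pdivlMr //.
set t := z - 1/2.
have ht : 0 <= t by rewrite /t; lra.
have h1 : 0 <= (t ^+ 2 - 2/5) ^+ 2 by apply: sqr_ge0.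
have h3 : 0 <= t ^+ 3 by apply: exprn_ge0.
have h2 : 0 <= t ^+ 2 by apply: sqr_ge0.
have -> : z = t + 1/2 by rewrite /t; lra.
rewrite !exprS !expr0 in h1 h2 h3 *.
nra.
Qed.

Definition kf (R : realType) (x : R) : R := ((`|x| + 1/2) ^+ 2)^-1.

Lemma kcont (R : realType) : continuous (@kf R).
Proof.
move=> x; apply: (@continuousV _ _ (fun x : R => (`|x| + 1/2) ^+ 2)).
  by rewrite expf_neq0 // gt_eqF // ltr_pwDr.
apply: (@continuous_comp _ _ _ (fun x : R => `|x| + 1/2) (fun y => y ^+ 2)).
  apply: continuousD; [exact: norm_continuous | exact: cst_continuous].
exact: exprn_continuous.
Qed.

Local Open Scope ereal_scope.

Theorem lemma2 (d : measure_display) (T : measurableType d) (R : realType)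
  (P : probability T R) (Z : {RV P >-> R})
  (hZ0 : forall w, (0 <= Z w)%R)
  (hZ2 : 'E_P[fun w => (Z w ^+ 2)%R] = 1%E) :
  ((1 / 53)%R)%:E <=
  'E_P[fun w => (Z w ^+ 2 * pos_part (Z w - 1 / 2) ^+ 2 / (Z w + 1 / 2) ^+ 2)%R].
Proof.
set g := fun w => (Z w ^+ 2 * pos_part (Z w - 1 / 2) ^+ 2 / (Z w + 1 / 2) ^+ 2)%R.
have mZ : measurable_fun setT Z by [].
have mZ2 : measurable_fun setT (fun w => Z w ^+ 2)%R.
  exact: measurable_realfun.measurable_funX.
have mg : measurable_fun setT g.
  have -> : g = ((fun w => Z w ^+ 2 * pos_part (Z w - 1 / 2) ^+ 2)%R \*
       (@kf R \o Z))%R.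
    apply/funext => w; rewrite /g /= /kf ger0_norm //.
  apply: measurable_realfun.measurable_funM.
    apply: measurable_realfun.measurable_funM => //.
    apply: measurable_realfun.measurable_funX.
    apply: measurable_realfun.measurable_maxr; first exact: measurable_cst.
    apply: measurable_realfun.measurable_funD => //; exact: measurable_cst.
  apply: measurableT_comp => //.
  apply: measurable_realfun.continuous_measurable_fun; exact: kcont.
have g0 : forall w, (0 <= g w)%R.
  move=> w; rewrite /g; apply: divr_ge0; last exact: sqr_ge0.
  by apply: mulr_ge0; apply: sqr_ge0.
have h1 : (1/4)%:E <= 'E_P[g] + (1/5)%:E.
  have -> : (1/4)%:E = \int[P]_w ((1/4)%:E * (Z w ^+ 2)%:E).
    rewrite ge0_integralZl_EFin //; last 2 first.
      by move=> w _; rewrite lee_fin sqr_ge0.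
      exact/measurable_realfun.measurable_EFinP.
    by move: hZ2; rewrite unlock => ->; rewrite mule1.
  have -> : 'E_P[g] + (1/5)%:E = \int[P]_w ((g w)%:E + (cst (1/5)%R w)%:E).
    rewrite ge0_integralD //.
    - rewrite unlock; congr (_ + _).
      rewrite -[RHS](_ : \int[P]_(x in setT) (cst (1/5)%:E) x = _); last by [].
      by rewrite integral_cst //= ?probability_setT ?mule1.
    - by move=> w _; rewrite lee_fin.
    - exact/measurable_realfun.measurable_EFinP.
    - by move=> w _; rewrite lee_fin /=; lra.
    - exact/measurable_realfun.measurable_EFinP/measurable_cst.
  apply: ge0_le_integral => //.
  - by move=> w _; rewrite mule_ge0 // lee_fin sqr_ge0.
  - apply: emeasurable_funM; first exact: measurable_cst.
    exact/measurable_realfun.measurable_EFinP.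
  - apply: emeasurable_funD; exact/measurable_realfun.measurable_EFinP.
  - move=> w _; rewrite -EFinM -EFinD lee_fin mulrC.
    have := @key R (Z w) (hZ0 w); rewrite /g /=; lra.
have h2 : ((1/4 - 1/5)%R)%:E <= 'E_P[g] by rewrite EFinB leeBlDr.
apply: le_trans h2; rewrite lee_fin; lra.
Qed.
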